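(* Let $(B,\lfloor\cdot,\cdot\rfloor)$ be an SSD space with quadratic form $q$, and let $A\subset B$ be a $q$-positive set. If $A$ is contained in more than one maximally $q$-positive set, then the family of maximally $q$-positive sets containing $A$ has at least the cardinality of the continuum.
   Context: An SSD space is a pair $(B,\lfloor\cdot,\cdot\rfloor)$ with $B$ a nonzero real vector space and $\lfloor\cdot,\cdot\rfloor$ a symmetric bilinear form on $B$; $q(b)=\frac12\lfloor b,b\rfloor$. A nonempty $A\subset B$ is $q$-positive if $q(b-c)\ge0$ for all $b,c\in A$; it is maximally $q$-positive if it is $q$-positive and not properly contained in another $q$-positive set. *)

(* Defs.v *)
From HB Require Import structures.
From mathcomp Require Import all_boot all_order all_algebra.
From mathcomp Require Import boolp classical_sets Rstruct.
Set Implicit Arguments. Unset Strict Implicit. Unset Printing Implicit Defensive.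
Import Order.TTheory GRing.Theory Num.Theory.
Local Open Scope ring_scope.
Local Open Scope classical_set_scope.

Notation realR := Rdefinitions.R.

Definition SSD_space (B : lmodType realR) (bf : B -> B -> realR) : Prop :=
  [/\ exists b : B, b != 0,
      (forall b c : B, bf b c = bf c b) &
      (forall (a : realR) (b c d : B), bf (a *: b + c) d = a * bf b d + bf c d)].

Definition qform (B : lmodType realR) (bf : B -> B -> realR) (b : B) : realR :=
  bf b b / 2.

Definition q_positive (B : lmodType realR) (bf : B -> B -> realR) (A : set B) : Prop :=
  A !=set0 /\ (forall b c, A b -> A c -> 0 <= qform bf (b - c)).

Definition max_q_positive (B : lmodType realR) (bf : B -> B -> realR) (A : set B) : Prop :=
  q_positive bf A /\ (forall A', q_positive bf A' -> A `<=` A' -> A' = A).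

(* Main.v *)
Require Import Defs.
From HB Require Import structures.
From mathcomp Require Import all_boot all_order all_algebra.
From mathcomp Require Import boolp classical_sets Rstruct.
From mathcomp Require Import ring lra.
Import Order.TTheory GRing.Theory Num.Theory.
Local Open Scope ring_scope.
Local Open Scope classical_set_scope.

Section Helpers.
Variables (B : lmodType realR) (bf : B -> B -> realR).
Hypothesis hs : forall b c : B, bf b c = bf c b.
Hypothesis hl : forall (a : realR) (b c d : B), bf (a *: b + c) d = a * bf b d + bf c d.

Lemma bf0l d : bf 0 d = 0.
Proof. have := hl 1 0 0 d. rewrite scaler0 addr0 mul1r => h. lra. Qed.

Lemma bfDl b c d : bf (b + c) d = bf b d + bf c d.
Proof. by have := hl 1 b c d; rewrite scale1r mul1r. Qed.

Lemma bfZl a b d : bf (a *: b) d = a * bf b d.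
Proof. by have := hl a b 0 d; rewrite addr0 bf0l addr0. Qed.

Lemma bfDr b c d : bf d (b + c) = bf d b + bf d c.
Proof. by rewrite hs bfDl (hs b) (hs c). Qed.

Lemma bfZr a b d : bf d (a *: b) = a * bf d b.
Proof. by rewrite hs bfZl (hs b). Qed.

Lemma bfN x : bf (- x) (- x) = bf x x.
Proof. by rewrite -scaleN1r bfZl bfZr; ring. Qed.

Lemma expand y d l :
  bf (y + l *: d) (y + l *: d) = bf y y + 2 * l * bf y d + l ^+ 2 * bf d d.
Proof. rewrite bfDl !bfDr !bfZl !bfZr (hs d y). ring. Qed.

Lemma qsym x y : qform bf (x - y) = qform bf (y - x).
Proof. by rewrite /qform -opprB bfN. Qed.

Definition qpos_on (S : set B) := forall b c, S b -> S c -> 0 <= qform bf (b - c).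

Lemma extend_max (S : set B) : q_positive bf S ->
  exists M, max_q_positive bf M /\ S `<=` M.
Proof.
move=> [S0 Spos].
have [|X [PX Xmax]] := @Zorn_bigcup B (fun X => qpos_on (S `|` X)).
  move=> F FP Ftot b c Hb Hc.
  case: Hb => [Sb|[Xb FXb Xbb]]; case: Hc => [Sc|[Xc FXc Xcc]].
  - exact: Spos.
  - by apply: (FP _ FXc); [left|right].
  - by apply: (FP _ FXb); [right|left].
  - have [XY|YX] := Ftot _ _ FXb FXc.
    + by apply: (FP _ FXc); right => //; apply: XY.
    + by apply: (FP _ FXb); right => //; apply: YX.
exists (S `|` X); split; last by move=> x Sx; left.
split.
  split; first by apply: subset_nonempty S0 => x; left.
  exact: PX.
move=> A' [A'0 A'pos] sub.
have SA' : S `<=` A' by move=> x Sx; apply: sub; left.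
have XA' : X `<=` A' by move=> x Xx; apply: sub; right.
have eA' : S `|` A' = A'.
  by apply/seteqP; split => [x [|]|x ?]; [apply: SA'|done|right].
have PA' : qpos_on (S `|` A') by rewrite eA'.
have [A'X|nA'X] := pselect (A' `<=` X).
  apply/seteqP; split => [x ?|x [?|?]]; [by right; apply: A'X|by apply: SA'|by apply: XA'].
by exfalso; apply: (Xmax A') => //; split.
Qed.

End Helpers.

Definition lam (t : realR) : realR := (1 + t / (1 + `|t|)) / 2.

Lemma lam_bounds t : 0 <= lam t <= 1.
Proof.
rewrite /lam; have hp : 0 < 1 + `|t| by rewrite ltr_wpDr.
have h1 : t / (1 + `|t|) <= 1.
  by rewrite ler_pdivrMr // mul1r; have := ler_norm t; lra.
have h2 : -1 <= t / (1 + `|t|).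
  by rewrite ler_pdivlMr // mulN1r; have := ler_norm t; have := normr_ge0 t; rewrite -normrN; have := ler_norm (-t); lra.
apply/andP; split; lra.
Qed.

Lemma lam_inj : injective lam.
Proof.
move=> s t; rewrite /lam => e.
have hs : 0 < 1 + `|s| by rewrite ltr_wpDr.
have ht : 0 < 1 + `|t| by rewrite ltr_wpDr.
have e2 : s / (1 + `|s|) = t / (1 + `|t|) by lra.
have e3 : s * (1 + `|t|) = t * (1 + `|s|).
  rewrite -[s in LHS](divfK (negbT (gt_eqF hs)) s) -[t in RHS](divfK (negbT (gt_eqF ht)) t) e2.
  ring.
case: (lerP 0 s) => s0; case: (lerP 0 t) => t0;
  rewrite ?(ger0_norm s0) ?(ger0_norm t0) ?(ltr0_norm s0) ?(ltr0_norm t0) in e3; nra.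
Qed.

Theorem mainTheorem2 (B : lmodType realR) (bf : B -> B -> realR) (A : set B) :
  SSD_space bf -> q_positive bf A ->
  (exists M1 M2 : set B, [/\ max_q_positive bf M1, max_q_positive bf M2,
                             A `<=` M1, A `<=` M2 & M1 <> M2]) ->
  exists F : realR -> set B,
    injective F /\ (forall t, max_q_positive bf (F t) /\ A `<=` F t).
Proof.
move=> [_ hs hl] [A0 Apos] [M1 [M2 [mx1 mx2 AM1 AM2 neq]]].
have key : forall N1 N2 : set B, max_q_positive bf N1 -> max_q_positive bf N2 ->
    ~ (N2 `<=` N1) -> exists b1 b2, [/\ N1 b1, N2 b2 & bf (b1 - b2) (b1 - b2) < 0].
  move=> N1 N2 [[N10 N1pos] N1max] _ nsub.
  have [b2 N2b2 nN1b2] := (existsPNP _ _).2 nsub.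
  have [b1 [N1b1 neg]] : exists b1, N1 b1 /\ bf (b1 - b2) (b1 - b2) < 0.
    apply: contrapT => hn; apply: nN1b2.
    have hge : forall b, N1 b -> 0 <= qform bf (b - b2).
      move=> b Nb; rewrite /qform divr_ge0 // leNgt; apply/negP => h.
      by apply: hn; exists b.
    have Upos : q_positive bf (N1 `|` [set b2]).
      split; first by exists b2; right.
      move=> b c [Nb|->] [Nc|->].
      - exact: N1pos.
      - exact: hge.
      - by rewrite qsym //; apply: hge.
      - by rewrite subrr /qform bf0l // mul0r.
    have := N1max _ Upos (fun x h => or_introl h) => <-.
    by right.
  by exists b1, b2.
have [[_ M1pos] _] := mx1.
have [[_ M2pos] _] := mx2.
have pos1 : forall b a, M1 b -> A a -> 0 <= bf (b - a) (b - a).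
  by move=> b a Mb Aa; have := M1pos b a Mb (AM1 _ Aa); rewrite /qform => h; lra.
have pos2 : forall b a, M2 b -> A a -> 0 <= bf (b - a) (b - a).
  by move=> b a Mb Aa; have := M2pos b a Mb (AM2 _ Aa); rewrite /qform => h; lra.
have [b1 [b2 [Mb1 Mb2 neg]]] : exists b1 b2,
    [/\ (forall a, A a -> 0 <= bf (b1 - a) (b1 - a)),
        (forall a, A a -> 0 <= bf (b2 - a) (b2 - a)) &
        bf (b1 - b2) (b1 - b2) < 0].
  have [s21|ns21] := pselect (M2 `<=` M1).
  - have s12 : ~ (M1 `<=` M2) by move=> s12; apply: neq; apply/seteqP.
    have [c1 [c2 [Mc1 Mc2 n]]] := key M2 M1 mx2 mx1 s12.
    exists c2, c1; split.
    + by move=> a Aa; apply: pos1.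
    + by move=> a Aa; apply: pos2.
    + by rewrite -opprB bfN.
  - have [c1 [c2 [Mc1 Mc2 n]]] := key M1 M2 mx1 mx2 ns21.
    exists c1, c2; split => //.
    + by move=> a Aa; apply: pos1.
    + by move=> a Aa; apply: pos2.
pose d := b1 - b2.
pose c t := b2 + lam t *: d.
have cpos : forall t a, A a -> 0 <= bf (c t - a) (c t - a).
  move=> t a Aa.
  have -> : c t - a = (b2 - a) + lam t *: d by rewrite /c addrAC.
  rewrite expand //.
  have X := Mb1 a Aa.
  have eX : b1 - a = (b2 - a) + 1 *: d by rewrite scale1r /d [RHS]addrC addrA subrK.
  rewrite eX expand // expr1n !mul1r mulr1 in X.
  have Y := Mb2 a Aa.
  have /andP [l0 l1] := lam_bounds t.
  have hp : 0 <= lam t * (1 - lam t) * - bf d d.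
    by apply: mulr_ge0; [apply: mulr_ge0; lra | rewrite /d; lra].
  nra.
pose S t := A `|` [set c t].
have Spos : forall t, q_positive bf (S t).
  move=> t; split; first by exists (c t); right.
  move=> x y [Ax|->] [Ay|->].
  - exact: Apos.
  - by rewrite qsym // /qform divr_ge0 // cpos.
  - by rewrite /qform divr_ge0 // cpos.
  - by rewrite subrr /qform bf0l // mul0r.
have [F HF] := choice (fun t => @extend_max B bf _ (Spos t)).
exists F; split; last first.
  move=> t; split; first exact: (HF t).1.
  by move=> x Ax; apply: (HF t).2; left.
move=> s t eF.
have [[[_ Fpos] _] Ss] := HF s.
have [_ St] := HF t.
have := Fpos (c s) (c t) (Ss _ (or_intror erefl)).
rewrite eF => /(_ (St _ (or_intror erefl))).
have -> : c s - c t = (lam s - lam t) *: d by rewrite /c scalerBl opprD addrACA subrr add0r.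
rewrite /qform bfZl // bfZr // => h.
apply: lam_inj.
have : (lam s - lam t) ^+ 2 <= 0 by nra.
rewrite expr2 => h2.
have : lam s - lam t = 0 by nra.
lra.
Qed.
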